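(* Let $\mathfrak{g}$ be a finite-dimensional real solvable Lie algebra equipped with an invariant scalar product $\langle\cdot,\cdot\rangle$ of Lorentzian signature (Witt index $1$) which is Einstein. Then $\mathfrak{g}$ is abelian.
   Context: A scalar product is a non-degenerate symmetric bilinear form; it is invariant if $\langle [x,y_1],y_2\rangle=-\langle y_1,[x,y_2]\rangle$ for all $x,y_1,y_2\in\mathfrak{g}$. It is Einstein if the bi-invariant metric on a connected Lie group with Lie algebra $\mathfrak{g}$ obtained by left translation of $\langle\cdot,\cdot\rangle$ is Einstein ($\mathrm{Ric}=\lambda\mathtt{g}$); for solvable $\mathfrak{g}$ this is equivalent to the vanishing of the Killing form. *)

(* Defs.v *)
From HB Require Import structures.
From mathcomp Require Import all_boot all_order all_algebra.
From mathcomp Require Import reals.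
Set Implicit Arguments. Unset Strict Implicit. Unset Printing Implicit Defensive.
Import Order.TTheory GRing.Theory Num.Theory.
Local Open Scope ring_scope.

Section LieDefs.
Variables (R : realType) (n : nat).
Local Notation V := 'rV[R]_n.

Definition is_lie_bracket (br : V -> V -> V) : Prop :=
  [/\ (forall (a : R) (x y z : V), br (a *: x + y) z = a *: br x z + br y z),
      (forall (a : R) (x y z : V), br x (a *: y + z) = a *: br x y + br x z),
      (forall x : V, br x x = 0) &
      (forall x y z : V, br x (br y z) + br y (br z x) + br z (br x y) = 0)].

(* Derived subalgebra of the subspace spanned by the rows of W:
   span of all brackets of elements of W (by bilinearity, of rows of W). *)
Definition derived_mx (br : V -> V -> V) (W : 'M[R]_n) : 'M[R]_n :=
  (\sum_(i < n) \sum_(j < n) <<br (row i W) (row j W)>>)%MS.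

Definition derived_series (br : V -> V -> V) (k : nat) : 'M[R]_n :=
  iter k (derived_mx br) (1%:M).

Definition solvable_lie (br : V -> V -> V) : Prop :=
  exists k, derived_series br k = 0.

Definition abelian_lie (br : V -> V -> V) : Prop :=
  forall x y : V, br x y = 0.

Definition sp (S : 'M[R]_n) (x y : V) : R := (x *m S *m y^T) 0 0.

Definition scalar_product (S : 'M[R]_n) : Prop := S^T = S /\ S \in unitmx.

(* Witt index 1: there is a nonzero isotropic vector, and no 2-dimensional
   totally isotropic subspace (maximal totally isotropic subspaces have dim 1). *)
Definition witt_index_one (S : 'M[R]_n) : Prop :=
  (exists v : V, v != 0 /\ sp S v v = 0) /\
  (forall U : 'M[R]_(2, n), \rank U = 2%N -> U *m S *m U^T != 0).

Definition invariant_sp (br : V -> V -> V) (S : 'M[R]_n) : Prop :=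
  forall x y1 y2 : V, sp S (br x y1) y2 = - sp S y1 (br x y2).

(* ad x as a matrix acting on row vectors: v *m ad_mx br x = br x v. *)
Definition ad_mx (br : V -> V -> V) (x : V) : 'M[R]_n := lin1_mx (br x).

Definition killing (br : V -> V -> V) (x y : V) : R :=
  \tr (ad_mx br x *m ad_mx br y).

(* Ricci tensor of the bi-invariant (pseudo-Riemannian) metric obtained by
   left translation of an invariant scalar product: Ric = -1/4 B. *)
Definition ricci_biinv (br : V -> V -> V) (x y : V) : R :=
  - (4%:R)^-1 * killing br x y.

Definition einstein (br : V -> V -> V) (S : 'M[R]_n) : Prop :=
  exists lam : R, forall x y : V, ricci_biinv br x y = lam * sp S x y.

End LieDefs.

(* Main.v *)
Require Import Defs.
From HB Require Import structures.
From mathcomp Require Import all_boot all_order all_algebra.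
From mathcomp Require Import reals.
From Stdlib Require Import Classical.
From mathcomp Require Import ring lra.
Import Order.TTheory GRing.Theory Num.Theory.
Local Open Scope ring_scope.
Set Implicit Arguments. Unset Strict Implicit. Unset Printing Implicit Defensive.

Section Basic.
Variables (R : realType) (n : nat).
Local Notation V := 'rV[R]_n.
Variable br : V -> V -> V.
Hypothesis Hlie : is_lie_bracket br.

Lemma brDl x y z : br (x + y) z = br x z + br y z.
Proof. by case: Hlie => H _ _ _; have := H 1 x y z; rewrite !scale1r. Qed.
Lemma br0l z : br 0 z = 0.
Proof. have h := brDl 0 0 z; rewrite addr0 in h. by apply: (addrI (br 0 z)); rewrite addr0 -h. Qed.
Lemma brZl a x z : br (a *: x) z = a *: br x z.
Proof. case: Hlie => H _ _ _; have := H a x 0 z; rewrite addr0 br0l addr0. by []. Qed.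
Lemma brDr x y z : br z (x + y) = br z x + br z y.
Proof. by case: Hlie => _ H _ _; have := H 1 z x y; rewrite !scale1r. Qed.
Lemma br0r z : br z 0 = 0.
Proof. have h := brDr 0 0 z; rewrite addr0 in h. by apply: (addrI (br z 0)); rewrite addr0 -h. Qed.
Lemma brZr a x z : br z (a *: x) = a *: br z x.
Proof. by case: Hlie => _ H _ _; have := H a z x 0; rewrite addr0 br0r addr0. Qed.
Lemma brNl x z : br (- x) z = - br x z.
Proof. by rewrite -scaleN1r brZl scaleN1r. Qed.
Lemma brNr x z : br z (- x) = - br z x.
Proof. by rewrite -scaleN1r brZr scaleN1r. Qed.
Lemma brBl x y z : br (x - y) z = br x z - br y z.
Proof. by rewrite brDl brNl. Qed.
Lemma brBr x y z : br z (x - y) = br z x - br z y.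
Proof. by rewrite brDr brNr. Qed.
Lemma br_anti x y : br x y = - br y x.
Proof.
case: Hlie => _ _ H _; have := H (x + y).
rewrite brDl !brDr !H add0r addr0 => /eqP; rewrite addr_eq0 => /eqP //.
Qed.
Lemma brxx x : br x x = 0.
Proof. by case: Hlie. Qed.
Lemma br_suml I (r : seq I) (P : pred I) (F : I -> V) z :
  br (\sum_(i <- r | P i) F i) z = \sum_(i <- r | P i) br (F i) z.
Proof.
elim/big_rec2: _ => [|i y1 y2 _ <-]; first exact: br0l.
by rewrite brDl.
Qed.
Lemma br_sumr I (r : seq I) (P : pred I) (F : I -> V) z :
  br z (\sum_(i <- r | P i) F i) = \sum_(i <- r | P i) br z (F i).
Proof.
elim/big_rec2: _ => [|i y1 y2 _ <-]; first exact: br0r.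
by rewrite brDr.
Qed.

Lemma ad_mxE x v : v *m ad_mx br x = br x v.
Proof.
rewrite /ad_mx {2}(row_sum_delta v) br_sumr.
apply/rowP => j; rewrite mxE summxE; apply: eq_bigr => i _.
by rewrite brZr !mxE.
Qed.
End Basic.

Section SP.
Variables (R : realType) (n : nat).
Local Notation V := 'rV[R]_n.
Variable S : 'M[R]_n.
Hypothesis HS : S^T = S.
Local Notation sp := (sp S).

Lemma entry_delta m (M : 'M[R]_(m, n)) i j : (M *m (delta_mx 0 j : 'rV_n)^T) i 0 = M i j.
Proof. by rewrite trmx_delta -colE mxE. Qed.

Lemma mx_form_eq (M M' : 'M[R]_n) :
  (forall u v : V, (u *m M *m v^T) 0 0 = (u *m M' *m v^T) 0 0) -> M = M'.
Proof.
move=> h; apply/matrixP => i j; have := h (delta_mx 0 i) (delta_mx 0 j).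
by rewrite !entry_delta -!rowE !mxE.
Qed.

Lemma spE x y : x *m S *m y^T = (sp x y)%:M.
Proof. exact: mx11_scalar. Qed.

Lemma sp_sym x y : sp x y = sp y x.
Proof.
rewrite /Defs.sp; transitivity (((x *m S *m y^T)^T) 0 0); first by rewrite [RHS]mxE.
by rewrite !trmx_mul trmxK HS mulmxA.
Qed.

Lemma spDl x y z : sp (x + y) z = sp x z + sp y z.
Proof. by rewrite /Defs.sp !mulmxDl mxE. Qed.
Lemma spZl a x z : sp (a *: x) z = a * sp x z.
Proof. by rewrite /Defs.sp -!scalemxAl mxE. Qed.
Lemma spNl x z : sp (- x) z = - sp x z.
Proof. by rewrite -scaleN1r spZl mulN1r. Qed.
Lemma spBl x y z : sp (x - y) z = sp x z - sp y z.
Proof. by rewrite spDl spNl. Qed.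
Lemma spDr x y z : sp z (x + y) = sp z x + sp z y.
Proof. by rewrite !(sp_sym z) spDl. Qed.
Lemma spZr a x z : sp z (a *: x) = a * sp z x.
Proof. by rewrite !(sp_sym z) spZl. Qed.
Lemma spNr x z : sp z (- x) = - sp z x.
Proof. by rewrite !(sp_sym z) spNl. Qed.
Lemma spBr x y z : sp z (x - y) = sp z x - sp z y.
Proof. by rewrite !(sp_sym z) spBl. Qed.
Lemma sp0l z : sp 0 z = 0.
Proof. by rewrite /Defs.sp !mul0mx mxE. Qed.
Lemma sp0r z : sp z 0 = 0.
Proof. by rewrite sp_sym sp0l. Qed.

Hypothesis HSu : S \in unitmx.

Lemma sp_nondeg x : (forall y, sp x y = 0) -> x = 0.
Proof.
move=> h; have xS0 : x *m S = 0.
  apply/rowP => j; have := h (delta_mx 0 j).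
  by rewrite /Defs.sp entry_delta => ->; rewrite mxE.
by rewrite -(mulmxK HSu x) xS0 mul0mx.
Qed.

Lemma sp_exists x : x != 0 -> exists y, sp x y != 0.
Proof.
move=> nz; case: (classic (exists y, sp x y != 0)) => // h.
exfalso; move/eqP: nz; apply; apply: sp_nondeg => y.
by apply/eqP; apply/negPn/negP => hy; apply: h; exists y.
Qed.

End SP.

Section GS.
Variables (R : realType) (n : nat).
Local Notation V := 'rV[R]_n.
Variable G : 'M[R]_n.
Hypothesis HG : G^T = G.
Hypothesis HPD : forall u : V, u != 0 -> 0 < sp G u u.

Lemma unit_row_neq0 (D : 'M[R]_n) i : D \in unitmx -> row i D != 0.
Proof.
move=> hD; rewrite rowE mulmx_free_eq0 ?row_free_unit //.
apply/eqP => /matrixP /(_ 0 i); rewrite !mxE !eqxx /=.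
by move/eqP; rewrite oner_eq0.
Qed.

Lemma gs_exists k : exists D : 'M[R]_n, D \in unitmx /\
  forall i j : 'I_n, (i < k)%N -> (j < k)%N -> i != j ->
    sp G (row i D) (row j D) = 0.
Proof.
elim: k => [|k [D [hD IH]]].
  by exists 1%:M; split; [exact: unitmx1|].
case: (ltnP k n) => hk; last first.
  exists D; split => // i j hi hj; apply: IH.
    exact: leq_trans (ltn_ord i) hk.
  exact: leq_trans (ltn_ord j) hk.
pose kk := Ordinal hk.
pose r i := row i D.
pose c i := sp G (r kk) (r i) / sp G (r i) (r i).
pose v := r kk - \sum_(i < n | (i < k)%N) c i *: r i.
pose D' := \matrix_(i < n) (if i == kk then v else r i).
have rD' i : row i D' = if i == kk then v else r i by rewrite rowK.
have rii i : sp G (r i) (r i) != 0.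
  by rewrite gt_eqF // HPD // unit_row_neq0.
have vj (j : 'I_n) : (j < k)%N -> sp G v (r j) = 0.
  move=> hj; rewrite /v spBl.
  have -> : sp G (\sum_(i < n | (i < k)%N) c i *: r i) (r j) =
            \sum_(i < n | (i < k)%N) c i * sp G (r i) (r j).
    elim/big_rec2: _ => [|i y1 y2 _ <-]; first exact: sp0l.
    by rewrite spDl spZl.
  rewrite (bigD1 j) //= big1 ?addr0.
    by rewrite /c divfK // subrr.
  move=> i /andP [hi nij]; rewrite IH ?mulr0 //.
exists D'; split.
  rewrite -row_full_unit -sub1mx; apply: (submx_trans (_ : 1%:M <= D)%MS).
    by rewrite sub1mx row_full_unit.
  apply/row_subP => i; case: (eqVneq i kk) => [->|nik].
    have -> : row kk D = v + \sum_(i < n | (i < k)%N) c i *: r i.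
      by rewrite /v subrK.
    apply: addmx_sub.
      by have := row_sub kk D'; rewrite rD' eqxx.
    apply: summx_sub => l hl; apply: scalemx_sub.
    have := row_sub l D'; rewrite rD'; case: eqP => // elk.
    by move: hl; rewrite elk /= ltnn.
  by have := row_sub i D'; rewrite rD' (negPf nik).
move=> i j hi hj nij; rewrite !rD'.
have ltk (l : 'I_n) : (l < k.+1)%N -> l != kk -> (l < k)%N.
  by move=> hl hlk; rewrite ltn_neqAle -ltnS hl andbT; apply: contra hlk => /eqP e; apply/eqP/val_inj.
case: (eqVneq i kk) => [eik|nik]; case: (eqVneq j kk) => [ejk|njk].
- by move: nij; rewrite eik ejk eqxx.
- by rewrite vj // ltk.
- by rewrite sp_sym // vj // ltk.
- by rewrite IH // ltk.
Qed.
End GS.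

Section SkewTrace.
Variables (R : realType) (n : nat).
Local Notation V := 'rV[R]_n.
Variable G : 'M[R]_n.
Hypothesis HG : G^T = G.
Hypothesis HPD : forall u : V, u != 0 -> 0 < sp G u u.

Lemma skew_trace0 (N : 'M[R]_n) :
  N *m G = - (G *m N^T) -> \tr (N *m N) = 0 -> N = 0.
Proof.
move=> hskew htr.
have [D [hD hort]] := gs_exists HG HPD n.
pose Dl := D *m G *m D^T.
have DlE i j : Dl i j = sp G (row i D) (row j D).
  have -> : Dl i j = row i Dl 0 j by rewrite [RHS]mxE.
  rewrite /Dl !row_mul /Defs.sp !mxE; apply: eq_bigr => l _; rewrite !mxE.
  done.
pose d := \row_i Dl i i.
have Dldiag : Dl = diag_mx d.
  apply/matrixP => i j; rewrite [RHS]mxE; case: eqVneq => [->|nij].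
    by rewrite mulr1n [RHS]mxE.
  by rewrite mulr0n DlE hort.
have dpos i : 0 < d 0 i by rewrite mxE DlE HPD // unit_row_neq0.
pose M := D *m N *m invmx D.
have hM : M *m Dl = - (Dl *m M^T).
  rewrite /M /Dl !trmx_mul trmx_inv.
  rewrite -!mulmxA (mulmxA (invmx D)) mulVmx // mul1mx.
  rewrite (mulmxA N) hskew mulNmx mulmxN; congr (- _).
  by rewrite mulKVmx ?unitmx_tr // !mulmxA.
have trM : \tr (M *m M) = 0.
  rewrite /M -!mulmxA (mulmxA (invmx D)) mulVmx // mul1mx.
  by rewrite mxtrace_mulC -!mulmxA mulVmx // mulmx1.
have ME : M = D *m N *m invmx D by [].
clearbody M d.
have Mij i j : M j i = - (M i j * d 0 j / d 0 i).
  have := congr1 (fun A : 'M[R]_n => A i j) hM; rewrite Dldiag mul_mx_diag mul_diag_mx !mxE.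
  move=> e; apply: (mulfI (lt0r_neq0 (dpos i))).
  by rewrite mulrN (mulrC (d 0 i) (_ / _)) divfK ?lt0r_neq0 ?dpos // e opprK.
have Msum : \sum_i \sum_j (M i j ^+ 2 * d 0 j / d 0 i) = 0.
  have e : \tr (M *m M) = - \sum_i \sum_j (M i j ^+ 2 * d 0 j / d 0 i).
    rewrite /mxtrace -sumrN; apply: eq_bigr => i _; rewrite mxE -sumrN.
    by apply: eq_bigr => j _; rewrite (Mij i j) expr2 mulrN !mulrA.
  by apply/eqP; rewrite -oppr_eq0 -e trM.
have Mz : M = 0.
  apply/matrixP => i j; rewrite mxE.
  have h0 i' j' : 0 <= M i' j' ^+ 2 * d 0 j' / d 0 i'.
    exact: divr_ge0 (mulr_ge0 (sqr_ge0 _) (ltW (dpos j'))) (ltW (dpos i')).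
  have hi : \sum_j (M i j ^+ 2 * d 0 j / d 0 i) = 0.
    by apply: (psumr_eq0P _ Msum) => // i' _; apply: sumr_ge0 => j' _; exact: h0.
  have /eqP := psumr_eq0P (fun j' _ => h0 i j') hi (i:=j) isT.
  rewrite mulf_eq0 invr_eq0 (gt_eqF (dpos i)) orbF mulf_eq0 (gt_eqF (dpos j)) orbF.
  by rewrite sqrf_eq0 => /eqP.
have : invmx D *m M *m D = N by rewrite ME !mulmxA mulVmx // mul1mx mulmxKV.
by rewrite Mz mulmx0 mul0mx => <-.
Qed.
End SkewTrace.

Section Key.
Variables (R : realType) (n : nat).
Local Notation V := 'rV[R]_n.
Variable S : 'M[R]_n.
Hypothesis HS : S^T = S.

Lemma mx11_mul m (x : 'M[R]_1) (B : 'M[R]_(1, m)) : x *m B = x 0 0 *: B.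
Proof. by rewrite {1}[x]mx11_scalar mul_scalar_mx. Qed.

Lemma scal0_mul m p (B : 'M[R]_(m, p)) : (0 : R)%:M *m B = 0.
Proof. by rewrite mul_scalar_mx scale0r. Qed.

Lemma key (z e : V) (A : 'M[R]_n) (sg : R) :
  sp S z z = 0 -> sp S e z = 1 -> sp S e e = 0 ->
  z *m A = 0 -> A *m S = - (S *m A^T) ->
  (forall w, sp S w z = 0 -> sp S w e = 0 -> w != 0 -> 0 < sg * sp S w w) ->
  \tr (A *m A) = 0 ->
  forall w, sp S w z = 0 -> exists k, w *m A = k *: z.
Proof.
move=> zz ez ee zA Askew Wdef trA.
pose c := S *m z^T. pose d := S *m e^T.
have uc u : u *m c = (sp S u z)%:M by rewrite /c mulmxA spE.
have ud u : u *m d = (sp S u e)%:M by rewrite /d mulmxA spE.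
have Ac : A *m c = 0.
  by rewrite /c mulmxA Askew mulNmx -mulmxA -trmx_mul zA trmx0 mulmx0 oppr0.
have cT : c^T = z *m S by rewrite /c trmx_mul HS trmxK.
have Sz : S *m z^T = c by [].
have Se : S *m e^T = d by [].
have dT : d^T = e *m S by rewrite /d trmx_mul HS trmxK.
clearbody c d.
pose P' := c *m e + d *m z.
have uP' u : u *m P' = sp S u z *: e + sp S u e *: z.
  by rewrite /P' mulmxDr !mulmxA uc ud !mul_scalar_mx.
have P'c : P' *m c = c.
  by rewrite /P' mulmxDl -!mulmxA !uc ez zz !mul_mx_scalar scale0r scale1r addr0.
have P'd : P' *m d = d.
  by rewrite /P' mulmxDl -!mulmxA !ud ee (sp_sym HS z e) ez !mul_mx_scalar scale0r scale1r add0r.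
have P'P' : P' *m P' = P'.
  rewrite {1}/P' mulmxDl -!mulmxA !uP' ez ee zz (sp_sym HS z e) ez.
  by rewrite !scale0r !scale1r addr0 add0r.
have P'S : P' *m S = S *m P'^T.
  rewrite /P' mulmxDl linearD /= !trmx_mul mulmxDr -!mulmxA -cT -dT !mulmxA Sz Se.
  by rewrite addrC.
have zP' : z *m P' = z.
  by rewrite uP' zz (sp_sym HS z e) ez scale0r scale1r add0r.
have AP' : A *m P' = (A *m d) *m z.
  by rewrite /P' mulmxDr !mulmxA Ac mul0mx add0r.
clearbody P'.
pose P := 1%:M - P'.
have PP : P *m P = P.
  by rewrite /P mulmxBl mul1mx mulmxBr mulmx1 P'P' subrr subr0.
have Pc : P *m c = 0 by rewrite /P mulmxBl mul1mx P'c subrr.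
have Pd : P *m d = 0 by rewrite /P mulmxBl mul1mx P'd subrr.
have zP : z *m P = 0 by rewrite /P mulmxBr mulmx1 zP' subrr.
have PS : P *m S = S *m P^T.
  by rewrite /P mulmxBl mul1mx linearB /= tr_scalar_mx mulmxBr mulmx1 P'S.
have PP' : P + P' = 1%:M by rewrite /P subrK.
clearbody P.
pose N := P *m A *m P.
have AP'A : A *m P' *m A = 0 by rewrite AP' -mulmxA zA mulmx0.
have AAE : A *m A = A *m P *m A.
  by rewrite -{1}[A]mulmx1 -PP' mulmxDr mulmxDl AP'A addr0.
have trN : \tr (N *m N) = 0.
  have -> : N *m N = P *m (A *m P *m A *m P).
    by rewrite /N -!mulmxA (mulmxA P P) PP.
  rewrite mxtrace_mulC -!mulmxA PP !mulmxA.
  have -> : A *m P *m A *m P = A *m P *m A - A *m P *m A *m P'.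
    by rewrite -[X in X - _]mulmx1 -PP' mulmxDr addrK.
  rewrite raddfB /= -AAE trA add0r -mulmxA AP' mulmxA mxtrace_mulC.
  by rewrite !mulmxA zA !mul0mx mxtrace0 oppr0.
pose G := sg *: (P *m S *m P^T) + c *m c^T + d *m d^T.
have GT : G^T = G.
  by rewrite /G !linearD /= linearZ /= !trmx_mul !trmxK HS mulmxA.
have cTP : c^T *m P^T = 0 by rewrite -trmx_mul Pc trmx0.
have dTP : d^T *m P^T = 0 by rewrite -trmx_mul Pd trmx0.
have NG : N *m G = - (G *m N^T).
  have e1 : N *m G = sg *: (P *m (A *m S) *m P^T).
    rewrite /G /N !mulmxDr -!mulmxA (mulmxA P c) (mulmxA P d) Pc Pd.
    rewrite !mul0mx !mulmx0 !addr0 -!scalemxAr; congr (_ *: _).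
    rewrite (mulmxA P P) PP (mulmxA P S) PS -(mulmxA S) -trmx_mul PP.
    by rewrite !mulmxA.
  have e2 : G *m N^T = sg *: (P *m (S *m A^T) *m P^T).
    rewrite /G /N !trmx_mul !mulmxDl -!mulmxA !(mulmxA c^T) !(mulmxA d^T) cTP dTP.
    rewrite !mul0mx !mulmx0 !addr0 -!scalemxAl; congr (_ *: _).
    have SPT : S *m P^T *m P^T = S *m P^T by rewrite -mulmxA -trmx_mul PP.
    by rewrite !mulmxA !PS !SPT.
  by rewrite e1 e2 Askew mulmxN mulNmx scalerN.
have spG u : sp G u u = sg * sp S (u *m P) (u *m P) + sp S u z ^+ 2 + sp S u e ^+ 2.
  have eG : u *m G *m u^T =
     (sg * sp S (u *m P) (u *m P) + sp S u z ^+ 2 + sp S u e ^+ 2)%:M.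
    rewrite /G !mulmxDr !mulmxDl -scalemxAr -scalemxAl.
    have -> : u *m (P *m S *m P^T) *m u^T = u *m P *m S *m (u *m P)^T.
      by rewrite trmx_mul !mulmxA.
    have -> : u *m (c *m c^T) *m u^T = (u *m c) *m (u *m c)^T.
      by rewrite trmx_mul !mulmxA.
    have -> : u *m (d *m d^T) *m u^T = (u *m d) *m (u *m d)^T.
      by rewrite trmx_mul !mulmxA.
    rewrite spE uc ud !tr_scalar_mx -!scalar_mxM -!expr2.
    by rewrite !raddfD /= scale_scalar_mx.
  by rewrite /Defs.sp eG mxE mulr1n.
have Wz u : sp S (u *m P) z = 0.
  have h := congr1 (fun M : 'M[R]_1 => M 0 0) (uc (u *m P)).
  by rewrite /= -mulmxA Pc mulmx0 !mxE mulr1n in h.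
have We u : sp S (u *m P) e = 0.
  have h := congr1 (fun M : 'M[R]_1 => M 0 0) (ud (u *m P)).
  by rewrite /= -mulmxA Pd mulmx0 !mxE mulr1n in h.
have uE u : u = u *m P + (sp S u z *: e + sp S u e *: z).
  by rewrite -uP' -mulmxDr PP' mulmx1.
have GPD u : u != 0 -> 0 < sp G u u.
  move=> nu; rewrite spG.
  have h1 := sqr_ge0 (sp S u z); have h2 := sqr_ge0 (sp S u e).
  case: (eqVneq (u *m P) 0) => [uP0|uPn].
    rewrite uP0 sp0l mulr0 add0r.
    case: (eqVneq (sp S u z) 0) => [hz|hz].
      case: (eqVneq (sp S u e) 0) => [he|he].
        by move: nu; rewrite (uE u) uP0 hz he !scale0r !addr0 eqxx.
      have : 0 < sp S u e ^+ 2 by rewrite exprn_even_gt0.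
      lra.
    have : 0 < sp S u z ^+ 2 by rewrite exprn_even_gt0.
    lra.
  have := Wdef _ (Wz u) (We u) uPn.
  lra.
have N0 : N = 0 by apply: (skew_trace0 GT GPD NG trN).
move=> w wz.
have wA : w *m A = (w *m P *m (A *m d)) *m z.
  rewrite {1}(uE w) wz scale0r add0r mulmxDl -scalemxAl zA scaler0 addr0.
  rewrite -[w *m P *m A]mulmx1 -PP' mulmxDr.
  have -> : w *m P *m A *m P = w *m N by rewrite /N !mulmxA.
  by rewrite N0 mulmx0 add0r -mulmxA AP' !mulmxA.
by exists ((w *m P *m (A *m d)) 0 0); rewrite wA mx11_mul.
Qed.
End Key.

Section Derived.
Variables (R : realType) (n : nat).
Local Notation V := 'rV[R]_n.
Variable br : V -> V -> V.
Hypothesis Hlie : is_lie_bracket br.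

Lemma br_in_derived (W : 'M[R]_n) u v :
  (u <= W)%MS -> (v <= W)%MS -> (br u v <= derived_mx br W)%MS.
Proof.
move=> /submxP [a ->] /submxP [b ->].
rewrite !mulmx_sum_row br_suml //; apply: summx_sub => i _.
rewrite br_sumr //; apply: summx_sub => j _.
rewrite brZl // brZr //; apply: scalemx_sub; apply: scalemx_sub.
apply: (sumsmx_sup i) => //; apply: (sumsmx_sup j) => //.
by rewrite genmxE.
Qed.

Lemma derived_sub (W X : 'M[R]_n) :
  (forall i j, (br (row i W) (row j W) <= X)%MS) -> (derived_mx br W <= X)%MS.
Proof.
move=> h; apply/sumsmx_subP => i _; apply/sumsmx_subP => j _.
by rewrite genmxE.
Qed.

Lemma derived_mono (W W' : 'M[R]_n) :
  (W <= W')%MS -> (derived_mx br W <= derived_mx br W')%MS.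
Proof.
move=> h; apply: derived_sub => i j; apply: br_in_derived;
  exact: submx_trans (row_sub _ _) h.
Qed.

Lemma br_in_I u v : (br u v <= derived_mx br 1%:M)%MS.
Proof. by apply: br_in_derived; rewrite submx1. Qed.
End Derived.

Section Main.
Variables (R : realType) (n : nat).
Local Notation V := 'rV[R]_n.
Variable br : V -> V -> V.
Variable S : 'M[R]_n.
Hypothesis Hlie : is_lie_bracket br.
Hypothesis HS : S^T = S.
Hypothesis HSu : S \in unitmx.
Hypothesis Hinv : invariant_sp br S.

Lemma ad_skew x : ad_mx br x *m S = - (S *m (ad_mx br x)^T).
Proof.
apply: mx_form_eq => u v.
rewrite mulmxN mulNmx [RHS]mxE.
have -> : u *m (ad_mx br x *m S) *m v^T = u *m ad_mx br x *m S *m v^T by rewrite !mulmxA.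
rewrite ad_mxE // -/(sp S (br x u) v) Hinv; congr (- _).
by rewrite /Defs.sp -(ad_mxE Hlie x v) trmx_mul !mulmxA.
Qed.

Local Notation I := (derived_mx br 1%:M).
Local Notation Z := (kermx (S *m I^T)).

Lemma inZ_orth v u : (v <= Z)%MS -> (u <= I)%MS -> sp S v u = 0.
Proof.
rewrite sub_kermx => /eqP h /submxP [a ->].
by rewrite /Defs.sp trmx_mul !mulmxA -(mulmxA v) h mul0mx mxE.
Qed.

Lemma inZ_central v a : (v <= Z)%MS -> br a v = 0.
Proof.
move=> hv; apply: (sp_nondeg HSu) => b.
by rewrite Hinv (inZ_orth hv) ?oppr0 // br_in_I.
Qed.

Lemma caseA : (I :&: Z)%MS == 0 -> solvable_lie br -> abelian_lie br.
Proof.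
move=> /eqP cap0 [k hk].
have rZ : \rank Z = (n - \rank I)%N.
  rewrite mxrank_ker -mxrank_tr trmx_mul trmxK HS mxrankMfree //.
  by rewrite row_free_unit.
have full : row_full (I + Z)%MS.
  apply/eqP; have := mxrank_sum_cap I Z; rewrite cap0 mxrank0 addn0 rZ.
  by rewrite subnKC ?rank_leq_col.
have IdI : (I <= derived_mx br I)%MS.
  apply: derived_sub => i j.
  have dec (u : V) : exists p q : V, [/\ (p <= I)%MS, (q <= Z)%MS & u = p + q].
    have : (u <= I + Z)%MS by apply: submx_full.
    by case/sub_addsmxP => [[a b]] /= ->; exists (a *m I), (b *m Z); rewrite !submxMl.
  have [p [q [hp hq ->]]] := dec (row i 1%:M).
  have [p' [q' [hp' hq' ->]]] := dec (row j 1%:M).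
  rewrite (brDl Hlie p q) (brDr Hlie p' q' p) (brDr Hlie p' q' q).
  rewrite (inZ_central p hq') (inZ_central q hq') !addr0.
  rewrite (br_anti Hlie q p') (inZ_central _ hq) oppr0 addr0.
  by apply: br_in_derived.
have Ik m : (I <= derived_series br m)%MS.
  elim: m => [|m IH]; first exact: submx1.
  rewrite /derived_series iterS -/(derived_series br m).
  exact: submx_trans IdI (derived_mono Hlie IH).
move=> x y; apply/eqP; rewrite -submx0 -(hk).
exact: submx_trans (br_in_I Hlie x y) (Ik k).
Qed.
End Main.

Section Aniso.
Variables (R : realType) (n : nat).
Local Notation V := 'rV[R]_n.
Variable S : 'M[R]_n.
Hypothesis HS : S^T = S.

Lemma aniso (z e : V) : witt_index_one S -> z != 0 -> sp S z z = 0 -> sp S e z = 1 ->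
  forall w, sp S w z = 0 -> sp S w e = 0 -> sp S w w = 0 -> w = 0.
Proof.
move=> [_ Hw] nz zz ez w wz we ww.
have U0 : col_mx z w *m S *m (col_mx z w)^T = 0.
  rewrite tr_col_mx mul_col_mx mul_col_row !spE zz ww wz (sp_sym HS z w) wz.
  by rewrite (_ : (0 : R)%:M = 0) ?block_mx0 //; apply/matrixP => i j; rewrite !mxE mul0rn.
have rk : \rank (col_mx z w) != 2%N.
  by apply/negP => /eqP /Hw; rewrite U0 eqxx.
have wsub : (w <= z)%MS.
  apply/negPn/negP => nwz; move: rk; apply/negP/negPn.
  have rE : \rank (col_mx z w) = \rank (z + w)%MS by rewrite addsmxE.
  rewrite rE eqn_leq.
  have -> : (\rank (z + w)%MS <= 2)%N by rewrite -rE rank_leq_row.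
  have : (z < z + w)%MS by rewrite ltmxE addsmxSl /= addsmx_sub submx_refl.
  by rewrite ltmxErank rank_rV nz => /andP [_].
case/sub_rVP: wsub => k wk.
move: we; rewrite wk spZl (sp_sym HS z e) ez mulr1 => k0.
by rewrite k0 scale0r.
Qed.
End Aniso.

Section Sign.
Variables (R : realType) (n : nat).
Local Notation V := 'rV[R]_n.
Variable S : 'M[R]_n.
Hypothesis HS : S^T = S.
Variables (z e : V).
Hypothesis Han : forall w, sp S w z = 0 -> sp S w e = 0 -> sp S w w = 0 -> w = 0.

Lemma no_indef u v : sp S u z = 0 -> sp S u e = 0 -> sp S v z = 0 -> sp S v e = 0 ->
  0 < sp S u u -> sp S v v < 0 -> False.
Proof.
move=> uz ue vz ve ua vc.
set a := sp S u u in ua; set c := sp S v v in vc; set b := sp S u v.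
pose s := Num.sqrt (b ^+ 2 - a * c).
have s2 : s ^+ 2 = b ^+ 2 - a * c.
  rewrite sqr_sqrtr //; have : 0 <= b ^+ 2 := sqr_ge0 b.
  have : 0 < - (a * c) by rewrite -mulrN mulr_gt0 // oppr_gt0.
  lra.
have c0 : c != 0 by rewrite lt_eqF.
pose t := (- b - s) / c.
have ct : c * t = - b - s by rewrite /t mulrC divfK.
pose w := u + t *: v.
have wz : sp S w z = 0 by rewrite /w spDl spZl uz vz mulr0 addr0.
have we : sp S w e = 0 by rewrite /w spDl spZl ue ve mulr0 addr0.
have ww : sp S w w = a + 2 * b * t + c * t ^+ 2.
  rewrite /w spDl !spDr // !spZl !spZr // (sp_sym HS v u) -/a -/b -/c.
  ring.
have ww0 : sp S w w = 0.
  apply: (mulfI c0); rewrite mulr0 ww.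
  have -> : c * (a + 2 * b * t + c * t ^+ 2) = a * c + 2 * b * (c * t) + (c * t) ^+ 2 by ring.
  rewrite ct; have -> : a * c + 2 * b * (- b - s) + (- b - s) ^+ 2 = a * c - b ^+ 2 + s ^+ 2 by ring.
  rewrite s2; ring.
have w0 := Han wz we ww0.
have uE : u = - (t *: v) by apply/eqP; rewrite -addr_eq0; apply/eqP.
have : a = t ^+ 2 * c.
  by rewrite /a uE spNl spNr // opprK spZl spZr // -/c mulrA -expr2.
have : 0 <= t ^+ 2 := sqr_ge0 t.
nra.
Qed.

Lemma sign_exists : exists sg : R, forall w, sp S w z = 0 -> sp S w e = 0 -> w != 0 ->
  0 < sg * sp S w w.
Proof.
case: (classic (exists v, [/\ sp S v z = 0, sp S v e = 0 & sp S v v < 0])).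
  move=> [v [vz ve vneg]]; exists (-1) => w wz we nw.
  rewrite mulN1r oppr_gt0.
  case: (ltrgt0P (sp S w w)) => // [wpos|w0].
    by case: (no_indef wz we vz ve wpos vneg).
  by move: nw; rewrite (Han wz we w0) eqxx.
move=> hneg; exists 1 => w wz we nw; rewrite mul1r.
case: (ltrgt0P (sp S w w)) => // [wneg|w0].
  by case: hneg; exists w.
by move: nw; rewrite (Han wz we w0) eqxx.
Qed.
End Sign.

Section CaseB.
Variables (R : realType) (n : nat).
Local Notation V := 'rV[R]_n.
Variable br : V -> V -> V.
Variable S : 'M[R]_n.
Hypothesis Hlie : is_lie_bracket br.
Hypothesis HS : S^T = S.
Hypothesis HSu : S \in unitmx.
Hypothesis Hinv : invariant_sp br S.
Hypothesis Hwitt : witt_index_one S.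
Hypothesis Heins : einstein br S.

Lemma caseB (z : V) : z != 0 -> (z <= derived_mx br 1%:M)%MS ->
  (z <= kermx (S *m (derived_mx br 1%:M)^T))%MS -> abelian_lie br.
Proof.
move=> nz hzI hzZ.
have zc a : br a z = 0 := inZ_central Hlie HSu Hinv a hzZ.
have zc' a : br z a = 0 by rewrite (br_anti Hlie z a) zc oppr0.
have zz : sp S z z = 0 := inZ_orth hzZ hzI.
have ad0 : ad_mx br z = 0.
  by apply/matrixP => i j; rewrite /ad_mx /lin1_mx !mxE zc' mxE.
case: Heins => lam hl.
have [y hy] := sp_exists HSu nz.
have lam0 : lam = 0.
  have := hl z y; rewrite /ricci_biinv /killing ad0 mul0mx mxtrace0 mulr0.
  by move=> /esym /eqP; rewrite mulf_eq0 (negPf hy) orbF => /eqP.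
have kill0 x x' : killing br x x' = 0.
  have := hl x x'; rewrite lam0 mul0r /ricci_biinv => /eqP.
  by rewrite mulf_eq0 oppr_eq0 invr_eq0 pnatr_eq0 orFb => /eqP.
pose e0 := (sp S y z)^-1 *: y.
have hy' : sp S y z != 0 by rewrite (sp_sym HS).
have e0z : sp S e0 z = 1 by rewrite /e0 spZl mulVf.
clearbody e0.
pose e := e0 - (sp S e0 e0 / 2) *: z.
have ez : sp S e z = 1 by rewrite /e spBl spZl zz mulr0 subr0.
have ee : sp S e e = 0.
  rewrite /e !spBl !spBr // !spZl !spZr // zz (sp_sym HS z e0) e0z.
  rewrite !mulr0 !mulr1 subr0; lra.
have Han := aniso HS Hwitt nz zz ez.
have [sg Hsg] := sign_exists HS Han.
have KEY x w : sp S w z = 0 -> exists k, br x w = k *: z.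
  move=> wz.
  have zA : z *m ad_mx br x = 0 by rewrite ad_mxE // zc.
  have trA : \tr (ad_mx br x *m ad_mx br x) = 0 := kill0 x x.
  have [k hk] := key HS zz ez ee zA (ad_skew Hlie Hinv x) Hsg trA wz.
  by exists k; rewrite -(ad_mxE Hlie x w).
have perp a : sp S (a - sp S a z *: e) z = 0 by rewrite spBl spZl ez mulr1 subrr.
have dec a : a = sp S a z *: e + (a - sp S a z *: e) by rewrite addrC subrK.
have C w : sp S w z = 0 -> forall a, br a w = 0.
  move=> wz a; apply: (sp_nondeg HSu) => b.
  rewrite Hinv; apply/eqP; rewrite oppr_eq0; apply/eqP.
  have spk k : sp S w (k *: z) = 0 by rewrite spZr // wz mulr0.
  have gen al be a' b' : sp S a' z = 0 -> sp S b' z = 0 ->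
      sp S w (br (al *: e + a') (be *: e + b')) = 0.
    move=> ha hb.
    rewrite (brDl Hlie) (brDr Hlie) (brDr Hlie) (brZl Hlie) (brZr Hlie) (brZr Hlie).
    rewrite (brZl Hlie) (brxx Hlie) !scaler0 add0r.
    have [k1 ->] := KEY e b' hb.
    have [k2 ->] := KEY a' b' hb.
    rewrite (br_anti Hlie a' e).
    have [k3 ->] := KEY e a' ha.
    by rewrite !spDr // !spZr // spNr // spZr // wz !mulr0 oppr0 mulr0 !addr0.
  by have := gen (sp S a z) (sp S b z) _ _ (perp a) (perp b); rewrite -!dec.
move=> x y'.
rewrite (dec y') (brDr Hlie) (C _ (perp y')) addr0 (brZr Hlie).
rewrite (br_anti Hlie x e) (dec x) (brDr Hlie) (C _ (perp x)) addr0 (brZr Hlie) (brxx Hlie).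
by rewrite scaler0 oppr0 scaler0.
Qed.
End CaseB.

Unset Implicit Arguments.
Theorem corollary5p2 (R : realType) (n : nat)
  (br : 'rV[R]_n -> 'rV[R]_n -> 'rV[R]_n) (S : 'M[R]_n) :
  is_lie_bracket br -> solvable_lie br ->
  scalar_product S -> witt_index_one S -> invariant_sp br S ->
  einstein br S ->
  abelian_lie br.
Proof.
move=> Hlie Hsolv [HS HSu] Hwitt Hinv Heins.
set M := ((derived_mx br 1%:M) :&: kermx (S *m (derived_mx br 1%:M)^T))%MS.
case: (eqVneq M 0) => [cap0|cap].
  by apply: (caseA Hlie HS HSu Hinv) => //; rewrite -/M cap0.
case: (pickP (fun i => row i M != 0)) => [i hi|h]; last first.
  by case/eqP: cap; apply/row_matrixP => i; rewrite row0; move/negbFE: (h i) => /eqP.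
apply: (caseB Hlie HS HSu Hinv Hwitt Heins hi).
  exact: submx_trans (row_sub i M) (capmxSl _ _).
exact: submx_trans (row_sub i M) (capmxSr _ _).
Qed.
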